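(* Let $M=\neg A_1\lor\dots\lor\neg A_n\lor D$ be a flat clause ($D$ positive), and for $i=1,\dots,n$ let $C_i=B_i\lor D_i$ be loosely guarded clauses with $B_i$ a positive literal, such that $M,C_1,\dots,C_n$ are pairwise variable-disjoint and, for each $i$, either $C_i$ is ground or $B_i$ contains a compound term. Let $\sigma'$ be a simultaneous most general unifier with $B_i\sigma'=A_i\sigma'$ for all $1\le i\le n$, and call a variable $x$ of $\neg A_1\lor\dots\lor\neg A_n$ a top variable if $\mathrm{Dep}(x\sigma')\ge\mathrm{Dep}(y\sigma')$ for every variable $y$ of $\neg A_1\lor\dots\lor\neg A_n$. Then: (1) For every $i$ such that $A_i$ contains a top variable, every top variable occurring in $A_i$ at argument position $k$ is matched by a constant or a compound term at position $k$ of $B_i$, and every non-top variable occurring in $A_i$ at position $k$ is matched by a constant or a variable at position $k$ of $B_i$. (2) If some top variable occurring in some $A_i$ is matched by a constant in $B_i$, then every variable of $\neg A_1\lor\dots\lor\neg A_n$ is a top variable and $\sigma'$ maps each such variable to a constant.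
   Context: A compound term is a term that is neither a variable nor a constant; $\mathrm{Var}(E)$ is the set of variables of $E$. Term depth: $\mathrm{Dep}(t)=0$ if $t$ is a variable or constant, and $\mathrm{Dep}(f(u_1,\dots,u_n))=1+\max_i\mathrm{Dep}(u_i)$. A literal is flat if every argument is a variable or constant; simple if every argument is a variable, a constant, or $f(u_1,\dots,u_n)$ with each $u_i$ a variable or constant; a clause is flat/simple if all its literals are. A clause $C$ is covering if every compound term $t$ in $C$ satisfies $\mathrm{Var}(t)=\mathrm{Var}(C)$. A loosely guarded clause is an equality-free, simple, covering clause $C$ that is either ground or contains a set $\mathcal G$ of negative flat literals with $\mathrm{Var}(\mathcal G)=\mathrm{Var}(C)$ such that every pair of variables of $C$ co-occurs in some literal of $\mathcal G$ (guarded clauses are special cases). For literals $A(s_1,\dots,s_k)$ and $B(r_1,\dots,r_k)$ being unified, the term $s_j$ is said to be matched by $r_j$. *)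

(* Defs.v *)
From Stdlib Require Import List Arith.
Import ListNotations.

Inductive term : Type :=
| Var : nat -> term
| Fn  : nat -> list term -> term.

Definition is_var (t : term) : Prop := exists x, t = Var x.
Definition is_const (t : term) : Prop := exists c, t = Fn c [].
Definition is_compound (t : term) : Prop := ~ is_var t /\ ~ is_const t.

Fixpoint depth (t : term) : nat :=
  match t with
  | Var _ => 0
  | Fn _ [] => 0
  | Fn _ l => S (fold_right Nat.max 0 (map depth l))
  end.

Inductive subterm (u : term) : term -> Prop :=
| subterm_refl : subterm u u
| subterm_arg : forall f l a, In a l -> subterm u a -> subterm u (Fn f l).

Definition occurs (x : nat) (t : term) : Prop := subterm (Var x) t.

(* Atoms: predicate symbol with argument list. Literals: sign (true = positive)
   and an atom.  The language has no equality predicate, so every clause is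
   equality-free. *)
Record atom : Type := mkAtom { pred_sym : nat; args : list term }.
Definition literal : Type := (bool * atom)%type.
Definition clause : Type := list literal.

Definition occurs_atom (x : nat) (A : atom) : Prop :=
  exists t, In t (args A) /\ occurs x t.
Definition occurs_lit (x : nat) (L : literal) : Prop := occurs_atom x (snd L).
Definition occurs_clause (x : nat) (C : clause) : Prop :=
  exists L, In L C /\ occurs_lit x L.

Definition term_in_clause (t : term) (C : clause) : Prop :=
  exists L u, In L C /\ In u (args (snd L)) /\ subterm t u.

Definition ground_clause (C : clause) : Prop := forall x, ~ occurs_clause x C.

Definition flat_atom (A : atom) : Prop :=
  forall t, In t (args A) -> is_var t \/ is_const t.
Definition flat_lit (L : literal) : Prop := flat_atom (snd L).
Definition flat_clause (C : clause) : Prop := forall L, In L C -> flat_lit L.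

Definition simple_term (t : term) : Prop :=
  is_var t \/ is_const t \/
  exists f l, t = Fn f l /\ forall u, In u l -> is_var u \/ is_const u.
Definition simple_lit (L : literal) : Prop :=
  forall t, In t (args (snd L)) -> simple_term t.
Definition simple_clause (C : clause) : Prop := forall L, In L C -> simple_lit L.

Definition covering (C : clause) : Prop :=
  forall t, term_in_clause t C -> is_compound t ->
    forall x, occurs x t <-> occurs_clause x C.

Definition negative_lit (L : literal) : Prop := fst L = false.
Definition positive_lit (L : literal) : Prop := fst L = true.

Definition loosely_guarded (C : clause) : Prop :=
  simple_clause C /\ covering C /\
  (ground_clause C \/
   exists G : list literal,
     (forall L, In L G -> In L C /\ negative_lit L /\ flat_lit L) /\
     (forall x, occurs_clause x G <-> occurs_clause x C) /\
     (forall x y, occurs_clause x C -> occurs_clause y C ->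
        exists L, In L G /\ occurs_lit x L /\ occurs_lit y L)).

Definition subst : Type := nat -> term.

Fixpoint subst_term (s : subst) (t : term) : term :=
  match t with
  | Var x => s x
  | Fn f l => Fn f (map (subst_term s) l)
  end.

Definition subst_atom (s : subst) (A : atom) : atom :=
  mkAtom (pred_sym A) (map (subst_term s) (args A)).

Definition sim_unifier (s : subst) (Bs As : list atom) : Prop :=
  length Bs = length As /\
  forall i B A, nth_error Bs i = Some B -> nth_error As i = Some A ->
    subst_atom s B = subst_atom s A.

Definition sim_mgu (s : subst) (Bs As : list atom) : Prop :=
  sim_unifier s Bs As /\
  forall th, sim_unifier th Bs As ->
    exists tau : subst, forall x, th x = subst_term tau (s x).

Definition neg_part (As : list atom) : clause := map (fun A => (false, A)) As.
Definition pos_part (D : list atom) : clause := map (fun A => (true, A)) D.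

Definition var_of_negs (As : list atom) (x : nat) : Prop :=
  occurs_clause x (neg_part As).

Definition top_var (s : subst) (As : list atom) (x : nat) : Prop :=
  var_of_negs As x /\
  forall y, var_of_negs As y -> depth (s y) <= depth (s x).

Definition var_disjoint (C C' : clause) : Prop :=
  forall x, occurs_clause x C -> occurs_clause x C' -> False.

Definition pairwise_var_disjoint (Cs : list clause) : Prop :=
  forall i j Ci Cj, i <> j -> nth_error Cs i = Some Ci -> nth_error Cs j = Some Cj ->
    var_disjoint Ci Cj.

(* some argument of the atom is compound (equivalently, it contains a compound subterm) *)
Definition has_compound (A : atom) : Prop :=
  exists t, In t (args A) /\ is_compound t.

(* Main.v *)
Require Import Defs.
From Stdlib Require Import List Arith Lia.
Import ListNotations.

Lemma fold_ge a l : In a l -> depth a <= fold_right Nat.max 0 (map depth l).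
Proof. induction l; simpl; intros H; [contradiction|]. destruct H; subst; [lia|]. specialize (IHl H); lia. Qed.

Lemma fold_lt l N : (forall a, In a l -> depth a < N) -> 0 < N ->
  fold_right Nat.max 0 (map depth l) < N.
Proof. induction l; simpl; intros H HN; [lia|].
  assert (depth a < N) by auto. assert (fold_right Nat.max 0 (map depth l) < N) by auto. lia. Qed.

Lemma depth_cons f a l : depth (Fn f (a :: l)) = S (fold_right Nat.max 0 (map depth (a :: l))).
Proof. reflexivity. Qed.

Lemma depth_in a f l : In a l -> depth a < depth (Fn f l).
Proof. intros H. destruct l as [|b l]; [contradiction|]. rewrite depth_cons.
  pose proof (fold_ge a (b :: l) H). lia. Qed.

Lemma subst_Fn s f l : subst_term s (Fn f l) = Fn f (map (subst_term s) l).
Proof. reflexivity. Qed.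

Lemma subterm_depth s u t : subterm u t -> depth (subst_term s u) <= depth (subst_term s t).
Proof. induction 1; [lia|]. rewrite subst_Fn.
  pose proof (depth_in (subst_term s a) f (map (subst_term s) l) (in_map _ _ _ H)). lia. Qed.

Lemma occurs_strict s y t : occurs y t -> t <> Var y -> depth (s y) < depth (subst_term s t).
Proof. intros H Hn. unfold occurs in H. destruct H as [|f l a Ha Hs]; [congruence|].
  pose proof (subterm_depth s _ _ Hs). simpl in H. rewrite subst_Fn.
  pose proof (depth_in (subst_term s a) f (map (subst_term s) l) (in_map _ _ _ Ha)). lia. Qed.

Lemma compound_shape t : is_compound t -> exists f a l, t = Fn f (a :: l).
Proof. destruct t as [v|f [|a l]]; unfold is_compound, is_var, is_const; intros [H1 H2].
  - exfalso; eauto. - exfalso; eauto. - eauto. Qed.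

Lemma cons_compound f a l : is_compound (Fn f (a :: l)).
Proof. split; intros [c Hc]; discriminate. Qed.

Lemma depth_pos s f a l : 0 < depth (subst_term s (Fn f (a :: l))).
Proof. rewrite subst_Fn. exact (Nat.lt_0_succ _). Qed.

Lemma compound_pos s t : is_compound t -> 0 < depth (subst_term s t).
Proof. intros H. destruct (compound_shape t H) as (f & a & l & ->). apply depth_pos. Qed.

Lemma simple_bound s f l q :
  (forall u, In u l -> is_var u \/ is_const u) ->
  (forall v, occurs v (Fn f l) -> occurs v q) -> is_compound q ->
  depth (subst_term s (Fn f l)) <= depth (subst_term s q).
Proof. intros Hl Hocc Hq. pose proof (compound_pos s q Hq).
  destruct l as [|a l']; [simpl; lia|]. rewrite subst_Fn.
  change (map (subst_term s) (a :: l')) with (subst_term s a :: map (subst_term s) l'). rewrite depth_cons.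
  enough (fold_right Nat.max 0 (map depth (subst_term s a :: map (subst_term s) l')) < depth (subst_term s q)) by lia.
  change (subst_term s a :: map (subst_term s) l') with (map (subst_term s) (a :: l')).
  apply fold_lt; auto. intros b Hb. apply in_map_iff in Hb. destruct Hb as (u & <- & Hu).
  destruct (Hl u Hu) as [[v ->]|[c ->]].
  - simpl. apply occurs_strict.
    + apply Hocc. eapply subterm_arg; [exact Hu| apply subterm_refl].
    + intros ->. destruct Hq as [Hq _]. apply Hq. eexists; reflexivity.
  - simpl. lia. Qed.

Lemma flat_occ t x : (is_var t \/ is_const t) -> occurs x t -> t = Var x.
Proof. intros [[v ->]|[c ->]] H; unfold occurs in H; inversion H; subst; auto; contradiction. Qed.

Lemma map_nth {X Y} (g : X -> Y) l1 l2 k a : map g l1 = map g l2 ->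
  nth_error l1 k = Some a -> exists b, nth_error l2 k = Some b /\ g b = g a.
Proof. intros E H. assert (H2 : nth_error (map g l1) k = Some (g a)) by (rewrite nth_error_map, H; reflexivity).
  rewrite E, nth_error_map in H2. destruct (nth_error l2 k); simpl in H2; inversion H2; eauto. Qed.

Lemma get_nth {X Y} (l1 : list X) (l2 : list Y) i a : length l2 = length l1 ->
  nth_error l1 i = Some a -> exists b, nth_error l2 i = Some b.
Proof. intros E H. assert (nth_error l1 i <> None) by congruence.
  apply nth_error_Some in H0. rewrite <- E in H0. apply nth_error_Some in H0.
  destruct (nth_error l2 i); eauto; congruence. Qed.

Lemma unif_args s Bs As i A B : sim_unifier s Bs As -> nth_error As i = Some A ->
  nth_error Bs i = Some B -> map (subst_term s) (args B) = map (subst_term s) (args A).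
Proof. intros [_ H] HA HB. specialize (H i B A HB HA). apply (f_equal args) in H. exact H. Qed.

Lemma vneg As A t x : In A As -> In t (args A) -> occurs x t -> var_of_negs As x.
Proof. intros. exists (false, A). split; [apply in_map_iff; eauto|]. exists t; eauto. Qed.

Lemma vneg_inv As y : (forall A, In A As -> flat_atom A) -> var_of_negs As y ->
  exists j A m, nth_error As j = Some A /\ nth_error (args A) m = Some (Var y).
Proof. intros Hf (L & HL & (t & Ht & Ho)). apply in_map_iff in HL. destruct HL as (A & <- & HA).
  simpl in Ht. pose proof (flat_occ _ _ (Hf A HA t Ht) Ho); subst.
  destruct (In_nth_error _ _ HA) as [j Hj]. destruct (In_nth_error _ _ Ht) as [m Hm]. eauto. Qed.

Lemma occ_B x B Di t : In t (args B) -> occurs x t -> occurs_clause x ((true, B) :: Di).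
Proof. intros. exists (true, B). split; [left; auto|]. exists t; auto. Qed.

Lemma tic_B t B Di : In t (args B) -> term_in_clause t ((true, B) :: Di).
Proof. intros. exists (true, B), t. repeat split; auto. left; auto. apply subterm_refl. Qed.

Theorem mainTheorem10
  (As D : list atom) (Bs : list atom) (Ds : list clause) (sigma : subst)
  (HM : flat_clause (neg_part As ++ pos_part D))
  (HlenB : length Bs = length As) (HlenD : length Ds = length As)
  (HLG : forall i B Di, nth_error Bs i = Some B -> nth_error Ds i = Some Di ->
           loosely_guarded ((true, B) :: Di))
  (Hdisj : pairwise_var_disjoint
             ((neg_part As ++ pos_part D) ::
              map (fun p => (true, fst p) :: snd p) (combine Bs Ds)))
  (Hgc : forall i B Di, nth_error Bs i = Some B -> nth_error Ds i = Some Di ->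
           ground_clause ((true, B) :: Di) \/ has_compound B)
  (Hmgu : sim_mgu sigma Bs As) :
  (forall i A B,
     nth_error As i = Some A -> nth_error Bs i = Some B ->
     (exists x, occurs_atom x A /\ top_var sigma As x) ->
     forall k x, nth_error (args A) k = Some (Var x) ->
       (top_var sigma As x ->
          exists r, nth_error (args B) k = Some r /\ (is_const r \/ is_compound r)) /\
       (~ top_var sigma As x ->
          exists r, nth_error (args B) k = Some r /\ (is_const r \/ is_var r)))
  /\
  ((exists i A B k x r,
      nth_error As i = Some A /\ nth_error Bs i = Some B /\
      nth_error (args A) k = Some (Var x) /\ top_var sigma As x /\
      nth_error (args B) k = Some r /\ is_const r) ->
   forall y, var_of_negs As y -> top_var sigma As y /\ is_const (sigma y)).
Proof.
  destruct Hmgu as [Hu _].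
  assert (Hflat : forall A, In A As -> flat_atom A).
  { intros A HA. apply (HM (false, A)). apply in_or_app; left. apply in_map_iff; eauto. }
  split.
  - intros i A B HA HB (x0 & Hx0 & Htop0) k x Hk.
    destruct (get_nth As Ds i A HlenD HA) as [Di HDi].
    pose proof (unif_args _ _ _ _ _ _ Hu HA HB) as E.
    destruct (map_nth _ _ _ k _ (eq_sym E) Hk) as (r & Hr & Er). simpl in Er.
    pose proof (HLG i B Di HB HDi) as (Hsimp & Hcov & _).
    assert (HAin := nth_error_In _ _ HA).
    assert (HrB := nth_error_In _ _ Hr).
    split.
    + intros Htop. exists r; split; auto.
      destruct r as [y|f [|a l]]; [exfalso| left; eexists; reflexivity| right; apply cons_compound].
      simpl in Er.
      destruct (Hgc i B Di HB HDi) as [Hg|(t & Ht & Hct)].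
      * apply (Hg y). eapply occ_B; [exact HrB| apply subterm_refl].
      * destruct (In_nth_error _ _ Ht) as [j Hj].
        destruct (map_nth _ _ _ j _ E Hj) as (a & Ha & Ea).
        assert (HaA := nth_error_In _ _ Ha).
        destruct (Hflat A HAin a HaA) as [[z ->]|[c ->]].
        -- simpl in Ea.
           assert (Hoy : occurs y t).
           { apply (proj2 (Hcov t (tic_B t B Di Ht) Hct y)). eapply occ_B; [exact HrB| apply subterm_refl]. }
           assert (depth (sigma y) < depth (subst_term sigma t)).
           { apply occurs_strict; auto. intros ->. apply (proj1 Hct). eexists; eauto. }
           assert (depth (sigma z) <= depth (sigma x)).
           { apply Htop. eapply vneg; eauto. apply subterm_refl. }
           rewrite Ea, Er in *. lia.
        -- destruct (compound_shape t Hct) as (f' & b & l' & ->). simpl in Ea. discriminate.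
    + intros Hnt. exists r; split; auto.
      destruct r as [y|f [|a l]]; [right; eexists; reflexivity| left; eexists; reflexivity| exfalso].
      destruct Hx0 as (t0 & Ht0 & Ho0).
      pose proof (flat_occ _ _ (Hflat A HAin t0 Ht0) Ho0); subst t0.
      destruct (In_nth_error _ _ Ht0) as [j Hj].
      destruct (map_nth _ _ _ j _ (eq_sym E) Hj) as (q & Hq & Eq). simpl in Eq.
      assert (HqB := nth_error_In _ _ Hq).
      assert (Hc := cons_compound f a l).
      assert (Hxv : var_of_negs As x).
      { eapply vneg; [exact HAin| eapply nth_error_In; exact Hk| apply subterm_refl]. }
      assert (Hdx : depth (sigma x) <= depth (sigma x0)) by (apply Htop0; auto).
      destruct q as [w|g [|b l']].
      * simpl in Eq.
        assert (Hw : occurs w (Fn f (a :: l))).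
        { apply (proj2 (Hcov _ (tic_B _ B Di HrB) Hc w)). eapply occ_B; [exact HqB| apply subterm_refl]. }
        assert (depth (sigma w) < depth (subst_term sigma (Fn f (a :: l)))).
        { apply occurs_strict; auto; discriminate. }
        rewrite Er, Eq in *. lia.
      * simpl in Eq. pose proof (depth_pos sigma f a l). rewrite <- Er, <- Eq in Hdx. simpl in Hdx. lia.
      * assert (Hc' := cons_compound g b l').
        destruct (Hsimp (true, B) (or_introl eq_refl) _ HqB) as [Hv|[Hv|(g' & l2 & Heq & Hl2)]].
        { destruct Hc' as [H1 _]; contradiction. }
        { destruct Hc' as [_ H1]; contradiction. }
        assert (depth (subst_term sigma (Fn g (b :: l'))) <= depth (subst_term sigma (Fn f (a :: l)))).
        { rewrite Heq. apply simple_bound; auto. intros v Hv. rewrite <- Heq in Hv.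
          apply (proj2 (Hcov _ (tic_B _ B Di HrB) Hc v)).
          apply (proj1 (Hcov _ (tic_B _ B Di HqB) Hc' v)). exact Hv. }
        apply Hnt. split; auto. intros y Hy. pose proof (proj2 Htop0 y Hy). rewrite <- Er, <- Eq in *. lia.
  - intros (i & A & B & k & x & r & HA & HB & Hk & Htop & Hr & [c ->]) y Hy.
    pose proof (unif_args _ _ _ _ _ _ Hu HA HB) as E.
    destruct (map_nth _ _ _ k _ E Hr) as (a & Ha & Ea).
    rewrite Hk in Ha. inversion Ha; subst a. simpl in Ea.
    assert (H0 : forall z, var_of_negs As z -> depth (sigma z) = 0).
    { intros z Hz. pose proof (proj2 Htop z Hz). rewrite Ea in H. simpl in H. lia. }
    split.
    { split; auto. intros z Hz. rewrite (H0 z Hz). lia. }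
    destruct (vneg_inv As y Hflat Hy) as (j & A' & m & HA' & Hm).
    destruct (get_nth As Bs j A' HlenB HA') as [B' HB'].
    destruct (get_nth As Ds j A' HlenD HA') as [D' HD'].
    pose proof (unif_args _ _ _ _ _ _ Hu HA' HB') as E'.
    destruct (map_nth _ _ _ m _ (eq_sym E') Hm) as (r' & Hr' & Er'). simpl in Er'.
    assert (HA'in := nth_error_In _ _ HA').
    destruct (Hgc j B' D' HB' HD') as [Hg|(t & Ht & Hct)].
    + destruct r' as [v|f [|b l]].
      * exfalso. apply (Hg v). eapply occ_B; [eapply nth_error_In; exact Hr'| apply subterm_refl].
      * simpl in Er'. rewrite <- Er'. eexists; reflexivity.
      * exfalso. pose proof (depth_pos sigma f b l). rewrite Er' in H. rewrite (H0 y Hy) in H. lia.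
    + exfalso. destruct (In_nth_error _ _ Ht) as [p Hp].
      destruct (map_nth _ _ _ p _ E' Hp) as (a & Ha' & Ea').
      destruct (Hflat A' HA'in a (nth_error_In _ _ Ha')) as [[z ->]|[c' ->]].
      * simpl in Ea'. pose proof (compound_pos sigma t Hct). rewrite <- Ea' in H.
        rewrite (H0 z) in H; [lia|]. eapply vneg; [exact HA'in| eapply nth_error_In; exact Ha'| apply subterm_refl].
      * destruct (compound_shape t Hct) as (f' & b & l' & ->). simpl in Ea'. discriminate.
Qed.
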